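(* Consider a one-hidden-layer discrete-time LIF-SNN with direct encoding, latency $T$, input dimension $n_{\mathrm{in}}$ and $n_1$ hidden neurons, with arbitrary fixed temporal parameters $u(0)\in\mathbb{R}^{n_1}$, $\beta\in[0,1]$, $\vartheta>0$. For $k\in[n_1]$ let $\mathcal{A}_k$ be the family of parallel hyperplanes corresponding to the $k$-th hidden neuron. Then one can construct a weight matrix $W\in\mathbb{R}^{n_1\times n_{\mathrm{in}}}$ and a bias vector $b\in\mathbb{R}^{n_1}$ such that the families $\mathcal{A}_1,\dots,\mathcal{A}_{n_1}$ are in general position.
   Context: The hidden layer evolves, for input $x\in\mathbb{R}^{n_{\mathrm{in}}}$ and $t\in[T]$, as $s(t)=H(\beta u(t-1)+Wx+b-\vartheta\mathbf{1})$, $u(t)=\beta u(t-1)+Wx+b-\vartheta s(t)$, with $H$ the entrywise Heaviside function. This yields $s_k(t)=H\big(\langle w_k,x\rangle+b_k-g_{t-1}(s_k(1),\dots,s_k(t-1))\big)$, where $w_k$ is the $k$-th row of $W$ and $g_{t-1}(a_1,\dots,a_{t-1})=\frac{-\beta^t u_k(0)+\vartheta(1+\sum_{i=1}^{t-1}\beta^i a_{t-i})}{\sum_{i=0}^{t-1}\beta^i}$ for $(a_1,\dots,a_{t-1})\in\{0,1\}^{t-1}$. The family $\mathcal{A}_k$ consists of the hyperplanes $\{x:\langle w_k,x\rangle+b_k-g_{t-1}(a)=0\}$ for $t\in[T]$ and $a\in\{0,1\}^{t-1}$. A finite set of hyperplanes in $\mathbb{R}^d$ is in general position if the intersection of any $p$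 distinct elements is empty when $p>d$ and a $(d-p)$-dimensional affine subspace when $p\le d$; families $\mathcal{A}_1,\dots,\mathcal{A}_{n_1}$ of parallel hyperplanes are in general position if every choice of one hyperplane from each family forms a set in general position. *)

(* Defs.v *)
From HB Require Import structures.
From mathcomp Require Import all_boot all_order all_algebra.
From mathcomp Require Import reals.
Set Implicit Arguments. Unset Strict Implicit. Unset Printing Implicit Defensive.
Import Order.TTheory GRing.Theory Num.Theory.
Local Open Scope ring_scope.

(* Threshold g_{t-1}(a_1,...,a_{t-1}) for neuron k, where the time step is
   t = t'.+1 (t' : 'I_T is zero-based) and a is the spike history
   (a_1,...,a_{t-1}) stored as a t'-tuple with a_{j+1} = nth false a j.
   g = (-beta^t u_k(0) + theta (1 + sum_{i=1}^{t-1} beta^i a_{t-i}))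
        / sum_{i=0}^{t-1} beta^i.
   With i = t' - j, a_{t-i} = a_{j+1}. *)
Definition thr {R : realType} (beta theta u0k : R) (t' : nat) (a : seq bool) : R :=
  (- beta ^+ t'.+1 * u0k
     + theta * (1 + \sum_(j < t') beta ^+ (t' - j) * (nth false a j)%:R))
  / \sum_(i < t'.+1) beta ^+ i.

(* Index of a hyperplane of the family A_k: a time step t in [T] (zero-based
   t' : 'I_T, t = t'.+1) and a spike history a in {0,1}^{t-1}. *)
Definition hyp_index (T : nat) := {t : 'I_T & (nat_of_ord t).-tuple bool}.

Definition hyperplane {R : realType} (nin n1 T : nat)
  (u0 : 'cV[R]_n1) (beta theta : R) (W : 'M[R]_(n1, nin)) (b : 'cV[R]_n1)
  (k : 'I_n1) (h : hyp_index T) (x : 'cV[R]_nin) : Prop :=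
  \sum_(j < nin) W k j * x j 0 + b k 0
    - thr beta theta (u0 k 0) (nat_of_ord (projT1 h)) (projT2 h) = 0.

Definition affine_subspace_dim {R : realType} (d m : nat) (S : 'cV[R]_d -> Prop) : Prop :=
  exists (x0 : 'cV[R]_d) (B : 'M[R]_(m, d)), row_free B /\
    forall x, S x <-> exists y : 'rV[R]_m, x = x0 + (y *m B)^T.

Definition families_general_position {R : realType} (nin n1 T : nat)
  (u0 : 'cV[R]_n1) (beta theta : R) (W : 'M[R]_(n1, nin)) (b : 'cV[R]_n1) : Prop :=
  forall (c : 'I_n1 -> hyp_index T) (P : {set 'I_n1}),
    let I := fun x => forall k, k \in P -> hyperplane u0 beta theta W b k (c k) x in
    if (nin < #|P|)%N then (forall x, ~ I x)
    else affine_subspace_dim (nin - #|P|) I.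

(* Main.v *)
Require Import Defs.
From HB Require Import structures.
From mathcomp Require Import all_boot all_order all_algebra.
From mathcomp Require Import reals boolp.
From mathcomp Require Import ring lra.
Import Order.TTheory GRing.Theory Num.Theory.
Local Open Scope ring_scope.

Definition ak {R : realType} {n} (k : 'I_n) : R := (k:nat)%:R.
Definition px {R : realType} {d} (x : 'cV[R]_d) : {poly R} := rVpoly (x^T).
Definition ZP {R : realType} {n} (P : {set 'I_n}) : {poly R} :=
  \prod_(z <- map ak (enum P)) ('X - z%:P).

Lemma ak_inj {R : realType} {n} : injective (@ak R n).
Proof. by move=> i j /eqP; rewrite /ak eqr_nat => /eqP /val_inj. Qed.

Lemma size_ZP {R : realType} {n} (P : {set 'I_n}) : size (ZP P : {poly R}) = #|P|.+1.
Proof. by rewrite /ZP size_prod_XsubC size_map -cardE. Qed.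

Lemma monic_ZP {R : realType} {n} (P : {set 'I_n}) : (ZP P : {poly R}) \is monic.
Proof. exact: monic_prod_XsubC. Qed.

Lemma ZP_root {R : realType} {n} (P : {set 'I_n}) k :
  ((ZP P : {poly R}).[ak k] == 0) = (k \in P).
Proof.
by have := root_prod_XsubC (map ak (enum P)) (ak k : R);
  rewrite /root => ->; rewrite (mem_map (@ak_inj R n)) mem_enum.
Qed.

Lemma size_px {R : realType} {d} (x : 'cV[R]_d) : (size (px x) <= d)%N.
Proof. exact: size_poly. Qed.

Lemma coef_px {R : realType} {d} (x : 'cV[R]_d) (i : 'I_d) : (px x)`_i = x i 0.
Proof. by rewrite /px coef_rVpoly_ord mxE. Qed.

Lemma horner_px {R : realType} {d} (x : 'cV[R]_d) t :
  (px x).[t] = \sum_(j < d) x j 0 * t ^+ j.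
Proof. by rewrite (horner_coef_wide _ (size_px x)); apply: eq_bigr => i _; rewrite coef_px. Qed.

Lemma px_inj {R : realType} {d} : injective (@px R d).
Proof.
move=> x y h; apply: trmx_inj; rewrite -[x^T]rVpolyK -[y^T]rVpolyK; congr poly_rV; exact: h.
Qed.

Lemma pxD {R : realType} {d} (x y : 'cV[R]_d) : px (x + y) = px x + px y.
Proof. by rewrite /px linearD /= linearD. Qed.

Lemma px_poly {R : realType} {d} (p : {poly R}) :
  (size p <= d)%N -> px ((poly_rV p : 'rV_d)^T) = p.
Proof. by move=> h; rewrite /px trmxK poly_rV_K. Qed.

Lemma coef_px_nin {R : realType} {d} (x : 'cV[R]_d) : (px x)`_d = 0.
Proof. by rewrite nth_default // size_px. Qed.
Lemma lag_exists {R : realType} {n} (P : {set 'I_n}) (v : 'I_n -> R) :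
  exists p : {poly R}, (size p <= #|P|)%N /\ forall k, k \in P -> p.[ak k] = v k.
Proof.
exists (\sum_(k in P) (v k / (ZP (P :\ k)).[ak k]) *: ZP (P :\ k)); split.
- apply: (big_ind (fun p : {poly R} => size p <= #|P|)%N).
  + by rewrite size_poly0.
  + move=> p q hp hq; apply: leq_trans (size_polyD _ _) _; by rewrite geq_max hp hq.
  + move=> k kP; apply: leq_trans (size_scale_leq _ _) _.
    by rewrite size_ZP (cardsD1 k P) kP.
- move=> k0 k0P; rewrite horner_sum (bigD1 k0) //= big1 ?addr0.
  + rewrite hornerZ divfK //; by rewrite ZP_root setD11.
  + move=> k /andP [kP kk0]; rewrite hornerZ.
    have /eqP -> : (ZP (P:\k)).[ak k0] == 0 :> R.
      by rewrite ZP_root in_setD1 k0P eq_sym kk0.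
    by rewrite mulr0.
Qed.

Lemma size_pxL {R : realType} {d} (x : 'cV[R]_d) L :
  (size (px x - L *: 'X^d)%R <= d.+1)%N.
Proof.
apply: leq_trans (size_polyD _ _) _; rewrite geq_max size_polyN.
rewrite (leq_trans (size_px x)) //.
by apply: leq_trans (size_scale_leq _ _) _; rewrite size_polyXn.
Qed.

Lemma uniqL {R : realType} {n d} (P : {set 'I_n}) (g : 'I_n -> R)
  (x1 x2 : 'cV[R]_d) L1 L2 :
  (d < #|P|)%N ->
  (forall k, k \in P -> (px x1).[ak k] = g k + L1 * ak k ^+ d) ->
  (forall k, k \in P -> (px x2).[ak k] = g k + L2 * ak k ^+ d) ->
  L1 = L2.
Proof.
move=> hP h1 h2.
set q := (px x1 - L1 *: 'X^d) - (px x2 - L2 *: 'X^d).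
have qz : q = 0.
  apply/eqP; apply/negPn/negP => qn0.
  have := @max_poly_roots _ q (map ak (enum P)) qn0.
  have -> : all (root q) (map ak (enum P)).
    apply/allP => z /mapP [k]; rewrite mem_enum => kP ->.
    rewrite /root /q !hornerE h1 // h2 //; apply/eqP; ring.
  rewrite map_inj_uniq ?enum_uniq; last exact: ak_inj.
  move=> /(_ isT isT); rewrite size_map -cardE => hs.
  have : (size q <= d.+1)%N.
    apply: leq_trans (size_polyD _ _) _; rewrite geq_max size_polyN !size_pxL //.
  move=> hq; have := leq_trans hs hq; rewrite ltnS => h.
  by move: (leq_trans hP h); rewrite ltnn.
have := congr1 (fun p : {poly R} => p`_d) qz.
rewrite /q /= !coefB !coefZ coefXn eqxx !coef_px_nin coef0 => h.
move: h; rewrite !mulr1 !sub0r opprK => h. by apply/esym/eqP; rewrite -subr_eq0 addrC h.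
Qed.
From mathcomp Require Import zify.

Lemma rVpoly_sum {R : realType} {m} (y : 'rV[R]_m) :
  rVpoly y = \sum_(i < m) y 0 i *: 'X^i.
Proof.
by rewrite /rVpoly poly_def; apply: eq_bigr => i _; rewrite valK.
Qed.

Lemma affine_part {R : realType} {n d} (P : {set 'I_n}) (v : 'I_n -> R)
  (I : 'cV[R]_d -> Prop) :
  (#|P| <= d)%N ->
  (forall x, I x <-> forall k, k \in P -> (px x).[ak k] = v k) ->
  affine_subspace_dim (d - #|P|) I.
Proof.
move=> hP hI.
have [p0 [sp0 hp0]] := lag_exists P v.
set m := (d - #|P|)%N.
set Z := ZP P : {poly R}.
have Zn0 : Z != 0 by apply: monic_neq0; apply: monic_ZP.
have sZ : size Z = #|P|.+1 by apply: size_ZP.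
pose B := \matrix_(i < m, j < d) ('X^i * Z)`_j.
have pyB : forall y : 'rV_m, px ((y *m B)^T) = rVpoly y * Z.
  move=> y.
  have hs : (size (rVpoly y * Z)%R <= d)%N.
    apply: leq_trans (size_polyMleq _ _) _.
    have := size_poly m (fun k => if insub k is Some i then y 0 i else 0).
    rewrite -/(rVpoly y) sZ /m addnS /=; move: hP => h1 h2; rewrite addnC -leq_subRL //; exact: h2.
  rewrite -(px_poly _ hs); congr px; congr trmx; apply/rowP => j; rewrite !mxE.
  rewrite rVpoly_sum mulr_suml coef_sum; apply: eq_bigr => i _.
  by rewrite mxE -scalerAl coefZ.
exists ((poly_rV p0 : 'rV_d)^T), B; split.
- apply/inj_row_free => y hy.
  have := pyB y; rewrite hy trmx0 /px trmx0 linear0 => /esym /eqP.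
  rewrite mulf_eq0 (negPf Zn0) orbF => /eqP h0.
  by rewrite -[y]rVpolyK h0 linear0.
- move=> x; rewrite hI; split.
  + move=> hx.
    set d0 := px x - p0.
    have dvd : Z %| d0.
      apply: uniq_roots_dvdp.
        apply/allP => z /mapP [k]; rewrite mem_enum => kP ->.
        by rewrite /root /d0 hornerD hornerN hx // hp0 // subrr.
      by rewrite uniq_rootsE map_inj_uniq ?enum_uniq //; apply: ak_inj.
    set q := d0 %/ Z.
    have hd : q * Z = d0 := divpK dvd.
    have sq : (size q <= m)%N.
      have [->|qn0] := eqVneq q 0; first by rewrite size_poly0.
      have sd : (size d0 <= d)%N.
        apply: leq_trans (size_polyD _ _) _; rewrite geq_max size_polyN size_px.
        exact: leq_trans sp0 hP.
      move: sd hP; rewrite -hd size_Mmonic ?monic_ZP // sZ /m addnS /= => H1 H2; rewrite leq_subRL // addnC; exact: H1.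
    exists (poly_rV q); apply: px_inj.
    rewrite pxD px_poly ?(leq_trans sp0 hP) // pyB poly_rV_K // hd /d0.
    by rewrite addrC subrK.
  + move=> [y ->] k kP.
    rewrite pxD px_poly ?(leq_trans sp0 hP) // pyB hornerD hornerM hp0 //.
    have /eqP -> : Z.[ak k] == 0 by rewrite ZP_root.
    by rewrite mulr0 addr0.
Qed.

Theorem lemmaB17 (R : realType) (T nin n1 : nat) (u0 : 'cV[R]_n1) (beta theta : R) :
  0 <= beta -> beta <= 1 -> 0 < theta ->
  exists (W : 'M[R]_(n1, nin)) (b : 'cV[R]_n1),
    families_general_position T u0 beta theta W b.
Proof.
move=> _ _ _.
pose W : 'M[R]_(n1, nin) := \matrix_(k, j) (ak k : R) ^+ j.
pose bv (L : R) : 'cV[R]_n1 := \matrix_(k, j) (- L * ak k ^+ nin).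
pose g (k : 'I_n1) (h : hyp_index T) :=
  thr beta theta (u0 k 0) (nat_of_ord (projT1 h)) (projT2 h).
have hypE : forall L k h x, hyperplane u0 beta theta W (bv L) k h x <->
    (px x).[ak k] = g k h + L * ak k ^+ nin.
  move=> L k h x; rewrite /hyperplane horner_px !mxE /g.
  have -> : \sum_(j < nin) W k j * x j 0 = \sum_(j < nin) x j 0 * ak k ^+ j.
    by apply: eq_bigr => j _; rewrite mxE mulrC.
  set s := \sum_(j < nin) _.
  set t := thr _ _ _ _ _.
  split=> H.
  + have -> : s = (s + - L * ak k ^+ nin - t) + (t + L * ak k ^+ nin) by ring.
    by rewrite H add0r.
  + rewrite H; ring.
pose bad (c : {ffun 'I_n1 -> hyp_index T}) (P : {set 'I_n1}) (L : R) :=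
  exists x : 'cV[R]_nin, forall k, k \in P -> hyperplane u0 beta theta W (bv L) k (c k) x.
pose r c P := match pselect (exists L, bad c P L) with
  | left H => sval (cid H) | right _ => 0 end.
pose S := \sum_(c : {ffun 'I_n1 -> hyp_index T}) \sum_(P : {set 'I_n1}) `|r c P|.
pose L0 := 1 + S.
exists W, (bv L0).
move=> c P /=.
case: ifP => hP.
- move=> x HI.
  pose c' := [ffun k => c k].
  have b0 : bad c' P L0 by exists x => k kP; rewrite ffunE; exact: HI k kP.
  have hr : r c' P = L0.
    rewrite /r; case: pselect => [H|[]]; last by exists L0.
    case: (cid H) => L' [x' hx'] /=.
    apply: (uniqL P (fun k => g k (c' k)) x' x L' L0 hP).
    + by move=> k kP; apply/hypE; apply: hx'.
    + by move=> k kP; apply/hypE; rewrite ffunE; exact: HI.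
  have hle : `|r c' P| <= S.
    apply: le_trans (_ : _ <= \sum_(P0 : {set 'I_n1}) `|r c' P0|) _.
      rewrite (bigD1 P) //= lerDl; apply: sumr_ge0 => *; exact: normr_ge0.
    rewrite /S (bigD1 c') //= lerDl; apply: sumr_ge0 => *; apply: sumr_ge0 => *.
    exact: normr_ge0.
  move: hle; rewrite hr /L0 => hle.
  have := le_trans (ler_norm _) hle.
  move=> h; clear -h; lra.
- apply: (affine_part P (fun k => g k (c k) + L0 * ak k ^+ nin)).
    by rewrite leqNgt hP.
  by move=> x; split=> H k kP; [apply/hypE/H | apply/hypE/H].
Qed.
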